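(* Let $n\ge4$ and let $x\in B$ with $|x|=2n+4$ and $\delta(x)=4$. Then $[x]_2\notin R$.
   Context: Stern's sequence $(a(n))_{n\ge0}$: $a(0)=0$, $a(1)=1$, $a(2n)=a(n)$, $a(2n+1)=a(n)+a(n+1)$; $s(n)=a(n+1)$. $R$ is the set of record-setters of $s$, i.e. indices $v\ge0$ with $s(i)<s(v)$ for all $i<v$. For a binary string $x$, $[x]_2$ is the integer it represents in base 2 and $|x|$ its length. $B$ denotes the set of nonempty binary strings that are concatenations of blocks each equal to $10$ or $100$; for $x\in B$, $\delta(x)$ is the number of $0$s minus the number of $1$s in $x$, which equals the number of $100$ blocks. *)

(* Defs.v *)
From mathcomp Require Import all_boot.
From mathcomp Require Import ssralg ssrint.
Set Implicit Arguments. Unset Strict Implicit. Unset Printing Implicit Defensive.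

(* Stern's diatomic sequence a(n), computed with fuel (fuel n suffices). *)
Fixpoint stern_fuel (fuel n : nat) : nat :=
  match fuel with
  | 0 => 0
  | f.+1 =>
    if n is 0 then 0 else if n == 1 then 1 else
    if ~~ odd n then stern_fuel f n./2
    else stern_fuel f n./2 + stern_fuel f (n./2).+1
  end.

Definition stern_a (n : nat) : nat := stern_fuel n.+1 n.

Definition stern_s (n : nat) : nat := stern_a n.+1.

Definition record_setter (v : nat) : Prop := forall i, i < v -> stern_s i < stern_s v.

(* binary strings: seq bool, most significant bit first, true = 1 *)
Definition bin_val (x : seq bool) : nat := foldl (fun acc (b : bool) => acc.*2 + nat_of_bool b) 0 x.

Definition inB (x : seq bool) : Prop :=
  exists blocks : seq (seq bool),
    blocks != [::] /\
    all (fun b => (b == [:: true; false]) || (b == [:: true; false; false])) blocks /\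
    x = flatten blocks.

Definition delta (x : seq bool) : int :=
  (Posz (count negb x) - Posz (count id x))%R.

(* Main.v *)
Require Import Defs.
From mathcomp Require Import all_boot.
From mathcomp Require Import ssralg ssrint.
From mathcomp Require Import zify.
From Stdlib Require Import ArithRing.

Lemma stern_fuel_eq f g n : n < f -> n < g -> stern_fuel f n = stern_fuel g n.
Proof.
elim: f g n => [|f IH] [|g] n //= Hf Hg.
case: n Hf Hg => [|[|n]] //= Hf Hg.
have H2 := odd_double_half n.
case: (boolP (odd n)) => Ho /=; [rewrite Ho /= in H2 | rewrite (negbTE Ho) /= in H2].
- rewrite (IH g n./2.+1) ?(IH g n./2.+2) //; lia.
- rewrite (IH g n./2.+1) //; lia.
Qed.

Lemma stern_fuel_a f n : n < f -> stern_fuel f n = stern_a n.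
Proof. move=> H; apply: stern_fuel_eq => //. Qed.

Lemma sf_step f n : 1 < n -> stern_fuel f.+1 n =
  if ~~ odd n then stern_fuel f n./2 else stern_fuel f n./2 + stern_fuel f (n./2).+1.
Proof. by case: n => [|[|n]]. Qed.

Lemma a_even m : stern_a m.*2 = stern_a m.
Proof.
case: m => [|m] //.
rewrite /stern_a sf_step; last by rewrite doubleS.
have -> : ~~ odd (m.+1).*2 = true by rewrite odd_double.
rewrite doubleK; apply: stern_fuel_a; lia.
Qed.

Lemma a_odd m : stern_a m.*2.+1 = stern_a m + stern_a m.+1.
Proof.
case: m => [|m] //.
rewrite /stern_a sf_step; last by rewrite doubleS.
have -> : ~~ odd (m.+1).*2.+1 = false by rewrite /= odd_double.
have -> : (m.+1).*2.+1./2 = m.+1 by exact: (half_bit_double _ true).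
rewrite !stern_fuel_a //; lia.
Qed.

Definition bstep (acc : nat) (b : bool) := acc.*2 + nat_of_bool b.

Lemma foldl_bstep acc y : foldl bstep acc y = acc * 2 ^ size y + foldl bstep 0 y.
Proof.
elim: y acc => [|b y IH] acc /=; first lia.
rewrite IH (IH (bstep 0 b)) /bstep expnS; lia.
Qed.

Lemma bin_val_cat x y : bin_val (x ++ y) = bin_val x * 2 ^ size y + bin_val y.
Proof. by rewrite /bin_val foldl_cat -/bstep foldl_bstep. Qed.

Lemma bin_val_rcons x b : bin_val (rcons x b) = (bin_val x).*2 + b.
Proof. by rewrite /bin_val foldl_rcons. Qed.

Lemma bin_val_cons b y : bin_val (b :: y) = b * 2 ^ size y + bin_val y.
Proof. by rewrite -cat1s bin_val_cat /bin_val /=; case: b. Qed.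

Lemma bin_val_lt y : bin_val y < 2 ^ size y.
Proof.
elim: y => [|b y IH] //.
rewrite bin_val_cons /= expnS; case: b => /=; lia.
Qed.

Lemma lex_lt u p q : size p = size q ->
  bin_val (u ++ false :: p) < bin_val (u ++ true :: q).
Proof.
move=> H.
rewrite !bin_val_cat !bin_val_cons /= H.
have := bin_val_lt p; rewrite H => Hp.
rewrite ltn_add2l; lia.
Qed.

Record m2 := M2 { e11 : nat; e12 : nat; e21 : nat; e22 : nat }.

Definition mmul (X Y : m2) : m2 :=
  M2 (Nat.add (Nat.mul (e11 X) (e11 Y)) (Nat.mul (e12 X) (e21 Y)))
     (Nat.add (Nat.mul (e11 X) (e12 Y)) (Nat.mul (e12 X) (e22 Y)))
     (Nat.add (Nat.mul (e21 X) (e11 Y)) (Nat.mul (e22 X) (e21 Y)))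
     (Nat.add (Nat.mul (e21 X) (e12 Y)) (Nat.mul (e22 X) (e22 Y))).

Definition I2 := M2 1 0 0 1.

Lemma mmulA X Y Z : mmul X (mmul Y Z) = mmul (mmul X Y) Z.
Proof. case: X Y Z => [? ? ? ?] [? ? ? ?] [? ? ? ?]; rewrite /mmul /=; f_equal; ring. Qed.

Lemma mmul1 X : mmul X I2 = X.
Proof. case: X => [? ? ? ?]; rewrite /mmul /=; f_equal; ring. Qed.

Lemma mmul1l X : mmul I2 X = X.
Proof. case: X => [? ? ? ?]; rewrite /mmul /=; f_equal; ring. Qed.

Definition Tb (b : bool) := if b then M2 1 1 0 1 else M2 1 0 1 1.

Definition Mx (x : seq bool) := foldl (fun M b => mmul (Tb b) M) I2 x.

Lemma foldl_Mx M y : foldl (fun M b => mmul (Tb b) M) M y = mmul (Mx y) M.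
Proof.
rewrite /Mx; elim: y M => [|b y IH] M /=; first by rewrite mmul1l.
by rewrite IH (IH (mmul (Tb b) I2)) -mmulA mmul1.
Qed.

Lemma Mx_cat x y : Mx (x ++ y) = mmul (Mx y) (Mx x).
Proof. by rewrite {1}/Mx foldl_cat foldl_Mx. Qed.

Lemma state x : stern_a (bin_val x) = e12 (Mx x) /\ stern_a (bin_val x).+1 = e22 (Mx x).
Proof.
elim/last_ind: x => [|x b [IH1 IH2]]; first by split.
rewrite bin_val_rcons -cats1 Mx_cat.
case: b => /=.
- rewrite addn1 -[((bin_val x).*2.+1).+1]/((bin_val x).+1.*2) a_even a_odd IH1 IH2; split; lia.
- rewrite addn0 a_even a_odd IH1 IH2; split; lia.
Qed.

Lemma s_Mx x : stern_s (bin_val x) = e22 (Mx x).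
Proof. by rewrite /stern_s (proj2 (state x)). Qed.

Definition AA : seq bool := [:: true; false].
Definition CC : seq bool := [:: true; false; false].
Definition DD : seq bool := [:: true; false; false; false].
Definition As (a : nat) : seq bool := flatten (nseq a AA).

Lemma As_S a : As a.+1 = AA ++ As a.
Proof. by []. Qed.

Lemma As_add m n : As (m + n) = As m ++ As n.
Proof. elim: m => [|m IH] //=. by rewrite !As_S IH catA. Qed.

Lemma size_As a : size (As a) = a.*2.
Proof. elim: a => [|a IH] //. by rewrite As_S size_cat IH doubleS. Qed.

Definition MA := M2 1 1 1 2.
Definition mpow (a : nat) := iter a (mmul MA) I2.

Lemma mpow_comm a : mmul MA (mpow a) = mmul (mpow a) MA.
Proof.
elim: a => [|a IH] /=; first by rewrite mmul1 mmul1l.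
by rewrite -/(mpow a) -mmulA IH.
Qed.

Lemma MxAA : Mx AA = MA. Proof. by []. Qed.
Lemma MxCC : Mx CC = M2 1 1 2 3. Proof. by []. Qed.
Lemma MxDD : Mx DD = M2 1 1 3 4. Proof. by []. Qed.

Lemma Mx_As a : Mx (As a) = mpow a.
Proof.
elim: a => [|a IH] //.
by rewrite As_S Mx_cat IH MxAA -mpow_comm.
Qed.

Definition madd (X Y : m2) : m2 :=
  M2 (Nat.add (e11 X) (e11 Y)) (Nat.add (e12 X) (e12 Y))
     (Nat.add (e21 X) (e21 Y)) (Nat.add (e22 X) (e22 Y)).
Definition Z2 := M2 0 0 0 0.
Definition MB := M2 1 2 2 3.
Definition MC := M2 1 1 2 3.
Definition MD := M2 1 1 3 4.

Ltac mring := repeat match goal with X : m2 |- _ => case: X => ? ? ? ? end;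
  rewrite /mmul /madd /Z2 /=; f_equal; rewrite -?plusE -?multE; ring.

Lemma mmulDl X Y Z : mmul (madd X Y) Z = madd (mmul X Z) (mmul Y Z).
Proof. mring. Qed.
Lemma mmulDr X Y Z : mmul Z (madd X Y) = madd (mmul Z X) (mmul Z Y).
Proof. mring. Qed.
Lemma mmul0l X : mmul Z2 X = Z2.
Proof. mring. Qed.
Lemma mmul0r X : mmul X Z2 = Z2.
Proof. mring. Qed.
Lemma maddA X Y Z : madd X (madd Y Z) = madd (madd X Y) Z.
Proof. mring. Qed.

Inductive inK : m2 -> Prop :=
| K0 : inK Z2
| KA P : inK P -> inK (madd P MA)
| KB P : inK P -> inK (madd P MB)
| KI P : inK P -> inK (madd P I2).

Lemma inK_add P Q : inK P -> inK Q -> inK (madd P Q).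
Proof.
move=> HP; elim => [|R _ IH|R _ IH|R _ IH].
- by case: P HP => ? ? ? ? HP; rewrite /madd /= !plusE !addn0.
- by rewrite maddA; constructor.
- by rewrite maddA; constructor.
- by rewrite maddA; constructor.
Qed.

Lemma inK_MA : inK MA. Proof. exact: (KA _ K0). Qed.
Lemma inK_MB : inK MB. Proof. exact: (KB _ K0). Qed.

Lemma inK_mulA P : inK P -> inK (mmul MA P).
Proof.
elim => [|Q _ IH|Q _ IH|Q _ IH]; rewrite ?mmul0r; try constructor; rewrite mmulDr.
- have -> : mmul MA MA = madd MA MB by [].
  by apply: inK_add => //; apply: inK_add; [apply: inK_MA|apply: inK_MB].
- have -> : mmul MA MB = madd MA (madd MB MB) by [].
  by apply: inK_add => //; apply: inK_add; [apply: inK_MA|apply: inK_add; apply: inK_MB].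
- have -> : mmul MA I2 = MA by [].
  by apply: inK_add => //; apply: inK_MA.
Qed.

Lemma inK_mpow a : inK (mpow a).
Proof.
elim: a => [|a IH]; first exact: (KI _ K0).
by apply: inK_mulA.
Qed.

Lemma e22_madd X Y : e22 (madd X Y) = e22 X + e22 Y.
Proof. by []. Qed.


Lemma e22_Z2 : e22 Z2 = 0. Proof. by []. Qed.

Definition X3 (C D F P2 P3 P4 : m2) : m2 := mmul (mmul (mmul (mmul (mmul (mmul P4 C) P3) C) P2) C) C.
Lemma X3D_P2 C D F P3 P4 P Q : X3 C D F (madd P Q) P3 P4 = madd (X3 C D F P P3 P4) (X3 C D F Q P3 P4).
Proof. rewrite /X3; by repeat rewrite ?mmulDl ?mmulDr. Qed.
Lemma X3Z_P2 C D F P3 P4 : X3 C D F Z2 P3 P4 = Z2.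
Proof. rewrite /X3; by repeat rewrite ?mmul0l ?mmul0r. Qed.
Lemma X3D_P3 C D F P2 P4 P Q : X3 C D F P2 (madd P Q) P4 = madd (X3 C D F P2 P P4) (X3 C D F P2 Q P4).
Proof. rewrite /X3; by repeat rewrite ?mmulDl ?mmulDr. Qed.
Lemma X3Z_P3 C D F P2 P4 : X3 C D F P2 Z2 P4 = Z2.
Proof. rewrite /X3; by repeat rewrite ?mmul0l ?mmul0r. Qed.
Lemma X3D_P4 C D F P2 P3 P Q : X3 C D F P2 P3 (madd P Q) = madd (X3 C D F P2 P3 P) (X3 C D F P2 P3 Q).
Proof. rewrite /X3; by repeat rewrite ?mmulDl ?mmulDr. Qed.
Lemma X3Z_P4 C D F P2 P3 : X3 C D F P2 P3 Z2 = Z2.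
Proof. rewrite /X3; by repeat rewrite ?mmul0l ?mmul0r. Qed.
Definition W3 (C D F P2 P3 P4 : m2) : m2 := mmul (mmul (mmul (mmul F P4) P3) P2) D.
Lemma W3D_P2 C D F P3 P4 P Q : W3 C D F (madd P Q) P3 P4 = madd (W3 C D F P P3 P4) (W3 C D F Q P3 P4).
Proof. rewrite /W3; by repeat rewrite ?mmulDl ?mmulDr. Qed.
Lemma W3Z_P2 C D F P3 P4 : W3 C D F Z2 P3 P4 = Z2.
Proof. rewrite /W3; by repeat rewrite ?mmul0l ?mmul0r. Qed.
Lemma W3D_P3 C D F P2 P4 P Q : W3 C D F P2 (madd P Q) P4 = madd (W3 C D F P2 P P4) (W3 C D F P2 Q P4).
Proof. rewrite /W3; by repeat rewrite ?mmulDl ?mmulDr. Qed.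
Lemma W3Z_P3 C D F P2 P4 : W3 C D F P2 Z2 P4 = Z2.
Proof. rewrite /W3; by repeat rewrite ?mmul0l ?mmul0r. Qed.
Lemma W3D_P4 C D F P2 P3 P Q : W3 C D F P2 P3 (madd P Q) = madd (W3 C D F P2 P3 P) (W3 C D F P2 P3 Q).
Proof. rewrite /W3; by repeat rewrite ?mmulDl ?mmulDr. Qed.
Lemma W3Z_P4 C D F P2 P3 : W3 C D F P2 P3 Z2 = Z2.
Proof. rewrite /W3; by repeat rewrite ?mmul0l ?mmul0r. Qed.
Definition X2 (C A F P1 P2 P3 P4 : m2) : m2 := mmul (mmul (mmul (mmul (mmul (mmul (mmul (mmul P4 C) P3) C) P2) C) P1) A) C.
Lemma X2D_P1 C A F P2 P3 P4 P Q : X2 C A F (madd P Q) P2 P3 P4 = madd (X2 C A F P P2 P3 P4) (X2 C A F Q P2 P3 P4).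
Proof. rewrite /X2; by repeat rewrite ?mmulDl ?mmulDr. Qed.
Lemma X2Z_P1 C A F P2 P3 P4 : X2 C A F Z2 P2 P3 P4 = Z2.
Proof. rewrite /X2; by repeat rewrite ?mmul0l ?mmul0r. Qed.
Lemma X2D_P2 C A F P1 P3 P4 P Q : X2 C A F P1 (madd P Q) P3 P4 = madd (X2 C A F P1 P P3 P4) (X2 C A F P1 Q P3 P4).
Proof. rewrite /X2; by repeat rewrite ?mmulDl ?mmulDr. Qed.
Lemma X2Z_P2 C A F P1 P3 P4 : X2 C A F P1 Z2 P3 P4 = Z2.
Proof. rewrite /X2; by repeat rewrite ?mmul0l ?mmul0r. Qed.
Lemma X2D_P3 C A F P1 P2 P4 P Q : X2 C A F P1 P2 (madd P Q) P4 = madd (X2 C A F P1 P2 P P4) (X2 C A F P1 P2 Q P4).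
Proof. rewrite /X2; by repeat rewrite ?mmulDl ?mmulDr. Qed.
Lemma X2Z_P3 C A F P1 P2 P4 : X2 C A F P1 P2 Z2 P4 = Z2.
Proof. rewrite /X2; by repeat rewrite ?mmul0l ?mmul0r. Qed.
Lemma X2D_P4 C A F P1 P2 P3 P Q : X2 C A F P1 P2 P3 (madd P Q) = madd (X2 C A F P1 P2 P3 P) (X2 C A F P1 P2 P3 Q).
Proof. rewrite /X2; by repeat rewrite ?mmulDl ?mmulDr. Qed.
Lemma X2Z_P4 C A F P1 P2 P3 : X2 C A F P1 P2 P3 Z2 = Z2.
Proof. rewrite /X2; by repeat rewrite ?mmul0l ?mmul0r. Qed.
Definition W2 (C A F P1 P2 P3 P4 : m2) : m2 := mmul (mmul (mmul (mmul (mmul (mmul F P4) P3) P2) P1) C) C.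
Lemma W2D_P1 C A F P2 P3 P4 P Q : W2 C A F (madd P Q) P2 P3 P4 = madd (W2 C A F P P2 P3 P4) (W2 C A F Q P2 P3 P4).
Proof. rewrite /W2; by repeat rewrite ?mmulDl ?mmulDr. Qed.
Lemma W2Z_P1 C A F P2 P3 P4 : W2 C A F Z2 P2 P3 P4 = Z2.
Proof. rewrite /W2; by repeat rewrite ?mmul0l ?mmul0r. Qed.
Lemma W2D_P2 C A F P1 P3 P4 P Q : W2 C A F P1 (madd P Q) P3 P4 = madd (W2 C A F P1 P P3 P4) (W2 C A F P1 Q P3 P4).
Proof. rewrite /W2; by repeat rewrite ?mmulDl ?mmulDr. Qed.
Lemma W2Z_P2 C A F P1 P3 P4 : W2 C A F P1 Z2 P3 P4 = Z2.
Proof. rewrite /W2; by repeat rewrite ?mmul0l ?mmul0r. Qed.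
Lemma W2D_P3 C A F P1 P2 P4 P Q : W2 C A F P1 P2 (madd P Q) P4 = madd (W2 C A F P1 P2 P P4) (W2 C A F P1 P2 Q P4).
Proof. rewrite /W2; by repeat rewrite ?mmulDl ?mmulDr. Qed.
Lemma W2Z_P3 C A F P1 P2 P4 : W2 C A F P1 P2 Z2 P4 = Z2.
Proof. rewrite /W2; by repeat rewrite ?mmul0l ?mmul0r. Qed.
Lemma W2D_P4 C A F P1 P2 P3 P Q : W2 C A F P1 P2 P3 (madd P Q) = madd (W2 C A F P1 P2 P3 P) (W2 C A F P1 P2 P3 Q).
Proof. rewrite /W2; by repeat rewrite ?mmulDl ?mmulDr. Qed.
Lemma W2Z_P4 C A F P1 P2 P3 : W2 C A F P1 P2 P3 Z2 = Z2.
Proof. rewrite /W2; by repeat rewrite ?mmul0l ?mmul0r. Qed.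
Definition X1 (C A F P0 P1 P2 P3 P4 : m2) : m2 := mmul (mmul (mmul (mmul (mmul (mmul (mmul (mmul (mmul P4 C) P3) C) P2) C) P1) C) P0) A.
Lemma X1D_P0 C A F P1 P2 P3 P4 P Q : X1 C A F (madd P Q) P1 P2 P3 P4 = madd (X1 C A F P P1 P2 P3 P4) (X1 C A F Q P1 P2 P3 P4).
Proof. rewrite /X1; by repeat rewrite ?mmulDl ?mmulDr. Qed.
Lemma X1Z_P0 C A F P1 P2 P3 P4 : X1 C A F Z2 P1 P2 P3 P4 = Z2.
Proof. rewrite /X1; by repeat rewrite ?mmul0l ?mmul0r. Qed.
Lemma X1D_P1 C A F P0 P2 P3 P4 P Q : X1 C A F P0 (madd P Q) P2 P3 P4 = madd (X1 C A F P0 P P2 P3 P4) (X1 C A F P0 Q P2 P3 P4).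
Proof. rewrite /X1; by repeat rewrite ?mmulDl ?mmulDr. Qed.
Lemma X1Z_P1 C A F P0 P2 P3 P4 : X1 C A F P0 Z2 P2 P3 P4 = Z2.
Proof. rewrite /X1; by repeat rewrite ?mmul0l ?mmul0r. Qed.
Lemma X1D_P2 C A F P0 P1 P3 P4 P Q : X1 C A F P0 P1 (madd P Q) P3 P4 = madd (X1 C A F P0 P1 P P3 P4) (X1 C A F P0 P1 Q P3 P4).
Proof. rewrite /X1; by repeat rewrite ?mmulDl ?mmulDr. Qed.
Lemma X1Z_P2 C A F P0 P1 P3 P4 : X1 C A F P0 P1 Z2 P3 P4 = Z2.
Proof. rewrite /X1; by repeat rewrite ?mmul0l ?mmul0r. Qed.
Lemma X1D_P3 C A F P0 P1 P2 P4 P Q : X1 C A F P0 P1 P2 (madd P Q) P4 = madd (X1 C A F P0 P1 P2 P P4) (X1 C A F P0 P1 P2 Q P4).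
Proof. rewrite /X1; by repeat rewrite ?mmulDl ?mmulDr. Qed.
Lemma X1Z_P3 C A F P0 P1 P2 P4 : X1 C A F P0 P1 P2 Z2 P4 = Z2.
Proof. rewrite /X1; by repeat rewrite ?mmul0l ?mmul0r. Qed.
Lemma X1D_P4 C A F P0 P1 P2 P3 P Q : X1 C A F P0 P1 P2 P3 (madd P Q) = madd (X1 C A F P0 P1 P2 P3 P) (X1 C A F P0 P1 P2 P3 Q).
Proof. rewrite /X1; by repeat rewrite ?mmulDl ?mmulDr. Qed.
Lemma X1Z_P4 C A F P0 P1 P2 P3 : X1 C A F P0 P1 P2 P3 Z2 = Z2.
Proof. rewrite /X1; by repeat rewrite ?mmul0l ?mmul0r. Qed.
Definition W1 (C A F P0 P1 P2 P3 P4 : m2) : m2 := mmul (mmul (mmul (mmul (mmul (mmul (mmul C F) P4) P3) P2) P1) P0) C.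
Lemma W1D_P0 C A F P1 P2 P3 P4 P Q : W1 C A F (madd P Q) P1 P2 P3 P4 = madd (W1 C A F P P1 P2 P3 P4) (W1 C A F Q P1 P2 P3 P4).
Proof. rewrite /W1; by repeat rewrite ?mmulDl ?mmulDr. Qed.
Lemma W1Z_P0 C A F P1 P2 P3 P4 : W1 C A F Z2 P1 P2 P3 P4 = Z2.
Proof. rewrite /W1; by repeat rewrite ?mmul0l ?mmul0r. Qed.
Lemma W1D_P1 C A F P0 P2 P3 P4 P Q : W1 C A F P0 (madd P Q) P2 P3 P4 = madd (W1 C A F P0 P P2 P3 P4) (W1 C A F P0 Q P2 P3 P4).
Proof. rewrite /W1; by repeat rewrite ?mmulDl ?mmulDr. Qed.
Lemma W1Z_P1 C A F P0 P2 P3 P4 : W1 C A F P0 Z2 P2 P3 P4 = Z2.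
Proof. rewrite /W1; by repeat rewrite ?mmul0l ?mmul0r. Qed.
Lemma W1D_P2 C A F P0 P1 P3 P4 P Q : W1 C A F P0 P1 (madd P Q) P3 P4 = madd (W1 C A F P0 P1 P P3 P4) (W1 C A F P0 P1 Q P3 P4).
Proof. rewrite /W1; by repeat rewrite ?mmulDl ?mmulDr. Qed.
Lemma W1Z_P2 C A F P0 P1 P3 P4 : W1 C A F P0 P1 Z2 P3 P4 = Z2.
Proof. rewrite /W1; by repeat rewrite ?mmul0l ?mmul0r. Qed.
Lemma W1D_P3 C A F P0 P1 P2 P4 P Q : W1 C A F P0 P1 P2 (madd P Q) P4 = madd (W1 C A F P0 P1 P2 P P4) (W1 C A F P0 P1 P2 Q P4).
Proof. rewrite /W1; by repeat rewrite ?mmulDl ?mmulDr. Qed.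
Lemma W1Z_P3 C A F P0 P1 P2 P4 : W1 C A F P0 P1 P2 Z2 P4 = Z2.
Proof. rewrite /W1; by repeat rewrite ?mmul0l ?mmul0r. Qed.
Lemma W1D_P4 C A F P0 P1 P2 P3 P Q : W1 C A F P0 P1 P2 P3 (madd P Q) = madd (W1 C A F P0 P1 P2 P3 P) (W1 C A F P0 P1 P2 P3 Q).
Proof. rewrite /W1; by repeat rewrite ?mmulDl ?mmulDr. Qed.
Lemma W1Z_P4 C A F P0 P1 P2 P3 : W1 C A F P0 P1 P2 P3 Z2 = Z2.
Proof. rewrite /W1; by repeat rewrite ?mmul0l ?mmul0r. Qed.
Global Hint Rewrite X3D_P2 X3Z_P2 X3D_P3 X3Z_P3 X3D_P4 X3Z_P4 W3D_P2 W3Z_P2 W3D_P3 W3Z_P3 W3D_P4 W3Z_P4 X2D_P1 X2Z_P1 X2D_P2 X2Z_P2 X2D_P3 X2Z_P3 X2D_P4 X2Z_P4 W2D_P1 W2Z_P1 W2D_P2 W2Z_P2 W2D_P3 W2Z_P3 W2D_P4 W2Z_P4 X1D_P0 X1Z_P0 X1D_P1 X1Z_P1 X1D_P2 X1Z_P2 X1D_P3 X1Z_P3 X1D_P4 X1Z_P4 W1D_P0 W1Z_P0 W1D_P1 W1Z_P1 W1D_P2 W1Z_P2 W1D_P3 W1Z_P3 W1D_P4 W1Z_P4 e22_madd : lin.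

Ltac cone_ind :=
  match goal with
  | H : inK _ |- _ =>
      elim: H => [|? _|? _|? _];
      [ autorewrite with lin; by rewrite e22_Z2
      | let h := fresh "IHc" in intro h;
        autorewrite with lin;
        apply: leq_add; [exact h | clear h; cone_ind] .. ]
  | |- _ => by vm_compute
  end.

Lemma case3_ineq a2 a3 a4 :
  e22 (Mx (CC ++ CC ++ As a2 ++ CC ++ As a3 ++ CC ++ As a4)) <=
  e22 (Mx (DD ++ As a2 ++ As a3 ++ As a4 ++ As 4)).
Proof.
move: (As 4) (Mx_As 4) => s4 H4'.
rewrite !Mx_cat !Mx_As -/MC MxCC -/MC MxDD -/MD H4'.
change (e22 (X3 MC MD (mpow 4) (mpow a2) (mpow a3) (mpow a4)) <=
        e22 (W3 MC MD (mpow 4) (mpow a2) (mpow a3) (mpow a4))).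
move: (inK_mpow a2) (inK_mpow a3) (inK_mpow a4).
generalize (mpow a2) (mpow a3) (mpow a4) => P2 P3 P4 H2 H3 H4.
cone_ind.
Qed.

Lemma case2_ineq a1 a2 a3 a4 :
  e22 (Mx (CC ++ AA ++ As a1 ++ CC ++ As a2 ++ CC ++ As a3 ++ CC ++ As a4)) <=
  e22 (Mx (CC ++ CC ++ As a1 ++ As a2 ++ As a3 ++ As a4 ++ As 4)).
Proof.
move: (As 4) (Mx_As 4) => s4 H4'.
rewrite !Mx_cat !Mx_As MxCC -/MC MxAA H4'.
change (e22 (X2 MC MA (mpow 4) (mpow a1) (mpow a2) (mpow a3) (mpow a4)) <=
        e22 (W2 MC MA (mpow 4) (mpow a1) (mpow a2) (mpow a3) (mpow a4))).
move: (inK_mpow a1) (inK_mpow a2) (inK_mpow a3) (inK_mpow a4).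
generalize (mpow a1) (mpow a2) (mpow a3) (mpow a4) => P1 P2 P3 P4 H1 H2 H3 H4.
cone_ind.
Qed.

Lemma case1_ineq a0 a1 a2 a3 a4 :
  e22 (Mx (AA ++ As a0 ++ CC ++ As a1 ++ CC ++ As a2 ++ CC ++ As a3 ++ CC ++ As a4)) <=
  e22 (Mx (CC ++ As a0 ++ As a1 ++ As a2 ++ As a3 ++ As a4 ++ As 4 ++ CC)).
Proof.
move: (As 4) (Mx_As 4) => s4 H4'.
rewrite !Mx_cat !Mx_As MxCC -/MC MxAA H4'.
change (e22 (X1 MC MA (mpow 4) (mpow a0) (mpow a1) (mpow a2) (mpow a3) (mpow a4)) <=
        e22 (W1 MC MA (mpow 4) (mpow a0) (mpow a1) (mpow a2) (mpow a3) (mpow a4))).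
move: (inK_mpow a0) (inK_mpow a1) (inK_mpow a2) (inK_mpow a3) (inK_mpow a4).
generalize (mpow a0) (mpow a1) (mpow a2) (mpow a3) (mpow a4) => P0 P1 P2 P3 P4 H0 H1 H2 H3 H4.
cone_ind.
Qed.

Definition isblk (b : seq bool) := (b == [:: true; false]) || (b == [:: true; false; false]).

Lemma blk_counts bs : all isblk bs ->
  count negb (flatten bs) = size bs + count (pred1 CC) bs /\ count id (flatten bs) = size bs.
Proof.
elim: bs => [|b bs IH] //= /andP [Hb Hall].
have [IH1 IH2] := IH Hall.
rewrite !count_cat IH1 IH2.
case/orP: Hb => /eqP -> /=; split; lia.
Qed.

Lemma decomp bs : all isblk bs -> exists a r, bs = nseq a AA ++ r /\ all isblk r /\
  (r = [::] \/ exists r', r = CC :: r').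
Proof.
elim: bs => [|b bs IH]; first by exists 0, [::]; split => //; split => //; left.
move=> /= /andP [Hb Hall].
case/orP: Hb => /eqP Hb.
- have [a [r [-> [Hr Hr']]]] := IH Hall.
  by exists a.+1, r; rewrite Hb.
- exists 0, (b :: bs); split => //; split; first by rewrite /= Hall Hb.
  by right; exists bs; rewrite Hb.
Qed.

Lemma count_nseqAA a r : count (pred1 CC) (nseq a AA ++ r) = count (pred1 CC) r.
Proof. by elim: a. Qed.

Lemma peel bs k : all isblk bs -> count (pred1 CC) bs = k.+1 ->
  exists a r, bs = nseq a AA ++ CC :: r /\ all isblk r /\ count (pred1 CC) r = k.
Proof.
move=> Hall Hc.
have [a [r [Hbs [Hr [Hr0|[r' Hr']]]]]] := decomp bs Hall.
- by move: Hc; rewrite Hbs Hr0 count_nseqAA.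
- exists a, r'; split; first by rewrite Hbs Hr'.
  move: Hr; rewrite Hr' /= => Hr2; split => //.
  move: Hc; rewrite Hbs Hr' count_nseqAA /=; lia.
Qed.

Lemma peel0 bs : all isblk bs -> count (pred1 CC) bs = 0 -> exists a, bs = nseq a AA.
Proof.
move=> Hall Hc.
have [a [r [Hbs [Hr [Hr0|[r' Hr']]]]]] := decomp bs Hall.
- by exists a; rewrite Hbs Hr0 cats0.
- by move: Hc; rewrite Hbs Hr' count_nseqAA /=.
Qed.

Lemma headT a s : exists q, As a ++ CC ++ s = true :: q.
Proof. by case: a => [|a]; eexists. Qed.

Lemma wit x w u p q : x = u ++ true :: q -> w = u ++ false :: p ->
  size x = size w -> e22 (Mx x) <= e22 (Mx w) -> ~ record_setter (bin_val x).
Proof.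
move=> Hx Hw Hs Hle Hr.
have Hpq : size p = size q by move: Hs; rewrite Hx Hw !size_cat /=; lia.
have := lex_lt u p q Hpq; rewrite -Hx -Hw => Hlt.
have := Hr _ Hlt.
rewrite !s_Mx; lia.
Qed.

Lemma main5 a0 a1 a2 a3 a4 :
  ~ record_setter (bin_val (As a0 ++ CC ++ As a1 ++ CC ++ As a2 ++ CC ++ As a3 ++ CC ++ As a4)).
Proof.
case: a0 => [|a0].
- rewrite -[As 0]/(@nil bool) cat0s.
  case: a1 => [|a1].
  + rewrite -[As 0]/(@nil bool) cat0s.
    apply: (@wit _ (DD ++ As a2 ++ As a3 ++ As a4 ++ As 4) [:: true; false; false]
       (As a2 ++ As a3 ++ As a4 ++ As 4)
       (false :: false :: As a2 ++ CC ++ As a3 ++ CC ++ As a4)) => //.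
    * by rewrite !size_cat !size_As /=; lia.
    * exact: case3_ineq.
  + have [q Hq] := headT a1 (As a2 ++ CC ++ As a3 ++ CC ++ As a4).
    rewrite As_S.
    apply: (@wit _ (CC ++ CC ++ As a1 ++ As a2 ++ As a3 ++ As a4 ++ As 4)
       [:: true; false; false; true; false]
       (As a1 ++ As a2 ++ As a3 ++ As a4 ++ As 4) q) => //.
    * by rewrite -Hq.
    * by rewrite !size_cat !size_As /=; lia.
    * exact: case2_ineq.
- have [q Hq] := headT a0 (As a1 ++ CC ++ As a2 ++ CC ++ As a3 ++ CC ++ As a4).
  rewrite As_S -catA.
  apply: (@wit _ (CC ++ As a0 ++ As a1 ++ As a2 ++ As a3 ++ As a4 ++ As 4 ++ CC)
       [:: true; false]
       (As a0 ++ As a1 ++ As a2 ++ As a3 ++ As a4 ++ As 4 ++ CC) q) => //.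
  * by rewrite -Hq.
  * by rewrite !size_cat !size_As /=; lia.
  * exact: case1_ineq.
Qed.

Theorem mainTheorem13 (n : nat) (x : seq bool) :
  4 <= n -> inB x -> size x = 2 * n + 4 -> delta x = Posz 4 ->
  ~ record_setter (bin_val x).
Proof.
move=> _ [bs [_ [Hall ->]]] _.
have Hall' : all isblk bs := Hall.
have [c1 c2] := blk_counts bs Hall'.
rewrite /delta c1 c2 => Hd.
have Hc : count (pred1 CC) bs = 4 by move: Hd; lia.
have [a0 [r0 [-> [H0 C0]]]] := peel bs 3 Hall' Hc.
have [a1 [r1 [-> [H1 C1]]]] := peel r0 2 H0 C0.
have [a2 [r2 [-> [H2 C2]]]] := peel r1 1 H1 C1.
have [a3 [r3 [-> [H3 C3]]]] := peel r2 0 H2 C2.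
have [a4 ->] := peel0 r3 H3 C3.
have E : forall a r, flatten (nseq a AA ++ CC :: r) = As a ++ CC ++ flatten r.
  by move=> a r; rewrite flatten_cat.
rewrite !E.
exact: main5.
Qed.
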